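(* Let $n\ge 2$ and let $\lvert\psi\rangle\in(\mathbb{C}^d)^{\otimes n}$ be a unit vector with Schmidt decomposition across qudit $1$ versus qudits $2,\ldots,n$ given by $\lvert\psi\rangle=\sum_{i=1}^d\alpha_i\lvert w_i\rangle\lvert v_i\rangle$, where $\alpha_i\ge0$, $\{\lvert w_i\rangle\}\subseteq\mathbb{C}^d$ and $\{\lvert v_i\rangle\}\subseteq(\mathbb{C}^d)^{\otimes n-1}$ are orthonormal sets. Define $\rho:=\sum_{i=1}^d\alpha_i^2\,\lvert w_i\rangle\langle w_i\rvert\otimes\lvert v_i\rangle\langle v_i\rvert$. Let $\Pi$ be a projector acting on some subset $\mathcal{S}\subseteq\{1,\ldots,n\}$ of the qudits (i.e. a projector on the qudits in $\mathcal{S}$ tensored with the identity on the others). If $\Pi$ crosses the Schmidt cut, i.e. $1\in\mathcal{S}$ and $\mathcal{S}\cap\{2,\ldots,n\}\neq\emptyset$, then $\mathrm{Tr}(\Pi\rho)\ge\frac1d\mathrm{Tr}(\Pi\lvert\psi\rangle\langle\psi\rvert)$. Otherwise $\mathrm{Tr}(\Pi\rho)=\mathrm{Tr}(\Pi\lvert\psi\rangle\langle\psi\rvert)$. *)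

(* Defs.v *)
From HB Require Import structures.
From mathcomp Require Import all_boot all_order all_algebra.
Set Implicit Arguments. Unset Strict Implicit. Unset Printing Implicit Defensive.
Import Order.TTheory GRing.Theory Num.Theory.
Local Open Scope ring_scope.

Section QuditDefs.
Variables (C : numClosedFieldType) (d : nat).

(* Basis labels of (C^d)^{(x) k}: a digit in 'I_d for each of the k qudits. *)
Definition conf (k : nat) := {ffun 'I_k -> 'I_d}.

(* The labels of qudits 2..n (in the paper's 1-based numbering) of a
   configuration of m.+1 qudits; qudit 1 is ord0. *)
Definition tailc (m : nat) (x : conf m.+1) : conf m := [ffun j => x (lift ord0 j)].

Definition restr (k : nat) (S : {set 'I_k}) (x : conf k) :
  {ffun {i : 'I_k | i \in S} -> 'I_d} := [ffun j => x (val j)].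

Definition orthonormal_fam (T : finType) (f : 'I_d -> T -> C) : Prop :=
  forall i j : 'I_d, \sum_(t : T) f i t * Num.conj (f j t) = (i == j)%:R.

Definition is_projector (T : finType) (P : T -> T -> C) : Prop :=
  (forall a b, P a b = Num.conj (P b a)) /\
  (forall a b, \sum_(c : T) P a c * P c b = P a b).

(* Pi = P (x) Id : P acts on the qudits in S, identity on the others. *)
Definition lift_op (k : nat) (S : {set 'I_k})
  (P : {ffun {i : 'I_k | i \in S} -> 'I_d} -> {ffun {i : 'I_k | i \in S} -> 'I_d} -> C)
  (x y : conf k) : C :=
  P (restr S x) (restr S y) * [forall j, (j \notin S) ==> (x j == y j)]%:R.

Definition trace_prod (T : finType) (A B : T -> T -> C) : C :=
  \sum_(x : T) \sum_(y : T) A x y * B y x.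

Definition ketbra (T : finType) (psi : T -> C) (x y : T) : C :=
  psi x * Num.conj (psi y).

Definition rho_of (m : nat) (alpha : 'I_d -> C) (w : 'I_d -> 'I_d -> C)
  (v : 'I_d -> conf m -> C) (x y : conf m.+1) : C :=
  \sum_(i : 'I_d) alpha i ^+ 2 * (w i (x ord0) * Num.conj (w i (y ord0)))
                   * (v i (tailc x) * Num.conj (v i (tailc y))).

End QuditDefs.

(* Main.v *)
Require Import Defs.
From HB Require Import structures.
From mathcomp Require Import all_boot all_order all_algebra.
From mathcomp Require Import ring.
Import Order.TTheory GRing.Theory Num.Theory.
Local Open Scope ring_scope.
Set Implicit Arguments. Unset Strict Implicit. Unset Printing Implicit Defensive.

Section H.
Variables (C : numClosedFieldType) (d : nat).

Lemma sum_delta (I : finType) (a : I) (H : I -> C) :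
  \sum_b (a == b)%:R * H b = H a.
Proof.
rewrite (bigD1 a) //= eqxx mul1r big1 ?addr0 // => b /negbTE.
by rewrite eq_sym => ->; rewrite mul0r.
Qed.

Lemma trace_ketbra_ge0 (T : finType) (Q : T -> T -> C) (f : T -> C) :
  is_projector Q -> 0 <= trace_prod Q (ketbra f).
Proof.
case=> herm idem.
have -> : trace_prod Q (ketbra f) =
  \sum_c (\sum_y Q c y * f y) * Num.conj (\sum_x Q c x * f x).
  rewrite /trace_prod /ketbra.
  transitivity (\sum_x \sum_y \sum_c Q x c * Q c y * (f y * Num.conj (f x))).
    apply: eq_bigr => x _; apply: eq_bigr => y _.
    by rewrite -(idem x y) mulr_suml.
  transitivity (\sum_c \sum_x \sum_y Q x c * Q c y * (f y * Num.conj (f x))).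
    under eq_bigr do rewrite exchange_big.
    by rewrite exchange_big.
  apply: eq_bigr => c _; rewrite exchange_big /=.
  rewrite rmorph_sum mulr_suml /=; apply: eq_bigr => y _.
  rewrite mulr_sumr /=; apply: eq_bigr => x _.
  rewrite rmorphM /= -herm; ring.
by apply: sumr_ge0 => c _; apply: mul_conjC_ge0.
Qed.

Definition glue k (S : {set 'I_k}) (x : conf d k)
  (h : {ffun {i : 'I_k | i \in S} -> 'I_d}) : conf d k :=
  [ffun j => odflt (x j) (omap h (insub j))].
Arguments glue {k} S x h.

Lemma restr_glue k (S : {set 'I_k}) x h : restr S (glue S x h) = h.
Proof. by apply/ffunP => s; rewrite !ffunE valK. Qed.

Lemma glue_out k (S : {set 'I_k}) x h j : j \notin S -> glue S x h j = x j.
Proof. by move=> jn; rewrite ffunE insubN. Qed.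

Definition agree k (S : {set 'I_k}) (x y : conf d k) :=
  [forall j, (j \notin S) ==> (x j == y j)].

Lemma glue_restr k (S : {set 'I_k}) x c : agree S x c -> glue S x (restr S c) = c.
Proof.
move=> /forallP H; apply/ffunP => j; rewrite ffunE.
case: insubP => [s js <-|jn] /=; first by rewrite ffunE.
by apply/eqP; move/implyP: (H j); apply.
Qed.

Lemma agree_glue k (S : {set 'I_k}) x h y : agree S (glue S x h) y = agree S x y.
Proof.
apply: eq_forallb => j; case: (boolP (j \in S)) => //= jn.
by rewrite glue_out.
Qed.

Lemma agree_glue_self k (S : {set 'I_k}) x h : agree S x (glue S x h).
Proof. by apply/forallP => j; apply/implyP => jn; rewrite glue_out. Qed.

Lemma lift_op_proj k (S : {set 'I_k}) P : is_projector P -> is_projector (@lift_op C d k S P).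
Proof.
case=> herm idem; split.
  move=> x y; rewrite /lift_op rmorphM /= rmorph_nat -herm; congr (_ * _%:R).
  congr (nat_of_bool _); by apply/forallP/forallP => H j; move: (H j); rewrite eq_sym.
move=> x y; rewrite /lift_op.
transitivity (\sum_(c | agree S x c) P (restr S x) (restr S c) *
   (P (restr S c) (restr S y) * (agree S c y)%:R)).
  rewrite [RHS]big_mkcond; apply: eq_bigr => c _; rewrite /agree.
  by case: [forall j, _]; rewrite ?mulr1 ?mulr0 ?mul0r // mulrA.
rewrite (reindex_onto (glue S x) (restr S)) /=; last by move=> c; apply: glue_restr.
rewrite (eq_bigl (fun _ => true)); last first.
  by move=> h; rewrite agree_glue_self restr_glue eqxx.
rewrite (eq_bigr (fun h => P (restr S x) h * P h (restr S y) * (agree S x y)%:R)); last first.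
  by move=> h _; rewrite restr_glue agree_glue mulrA.
by rewrite -mulr_suml idem.
Qed.

Definition consc m (a : 'I_d) (t : conf d m) : conf d m.+1 :=
  [ffun j => if unlift ord0 j is Some k then t k else a].

Lemma consc0 m a (t : conf d m) : consc a t ord0 = a.
Proof. by rewrite ffunE unlift_none. Qed.

Lemma conscS m a (t : conf d m) k : consc a t (lift ord0 k) = t k.
Proof. by rewrite ffunE liftK. Qed.

Lemma tailc_cons m a (t : conf d m) : tailc (consc a t) = t.
Proof. by apply/ffunP => k; rewrite ffunE conscS. Qed.

Lemma cons_eta m (x : conf d m.+1) : consc (x ord0) (tailc x) = x.
Proof.
apply/ffunP => j; case: (unliftP ord0 j) => [k ->|->].
  by rewrite conscS ffunE.
by rewrite consc0.
Qed.

Lemma sum_conf m (F : conf d m.+1 -> C) :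
  \sum_x F x = \sum_a \sum_t F (consc a t).
Proof.
rewrite pair_bigA /=.
rewrite (reindex (fun p : 'I_d * conf d m => consc p.1 p.2)) //=.
exists (fun x : conf d m.+1 => (x ord0, tailc x)) => [[a t] _|x _] /=.
  by rewrite consc0 tailc_cons.
by rewrite cons_eta.
Qed.


Lemma pi_noz m (S : {set 'I_m.+1}) P (c : 'I_d) : ord0 \notin S ->
  forall a b (t s : conf d m),
  @lift_op C d m.+1 S P (consc a t) (consc b s) =
  (a == b)%:R * @lift_op C d m.+1 S P (consc c t) (consc c s).
Proof.
move=> h0 a b t s.
have hr : forall a' c' (t' : conf d m), restr S (consc a' t') = restr S (consc c' t').
  move=> a' c' t'; apply/ffunP => j; rewrite !ffunE.
  case: (unliftP ord0 (val j)) => [k _|e] //.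
  by move: (valP j); rewrite e (negbTE h0).
have hf : [forall j, (j \notin S) ==> (consc a t j == consc b s j)] =
   (a == b) && [forall j, (j \notin S) ==> (consc c t j == consc c s j)].
  apply/forallP/andP.
    move=> H; split; first by move/implyP: (H ord0) => /(_ h0); rewrite !consc0.
    apply/forallP => j; apply/implyP => jn.
    case: (unliftP ord0 j) jn => [k ->|->] jn; last by rewrite !consc0.
    by move/implyP: (H (lift ord0 k)) => /(_ jn); rewrite !conscS.
  case=> /eqP <- /forallP H j; apply/implyP => jn.
  case: (unliftP ord0 j) jn => [k ->|->] jn; last by rewrite !consc0.
  by move/implyP: (H (lift ord0 k)) => /(_ jn); rewrite !conscS.
rewrite /lift_op hf (hr a c) (hr b c) -mulnb natrM.
by rewrite mulrCA.
Qed.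

Lemma pi_tail m (S : {set 'I_m.+1}) P (t0 : conf d m) :
  (forall j, j \in S -> j = ord0) ->
  forall a b (t s : conf d m),
  @lift_op C d m.+1 S P (consc a t) (consc b s) =
  (t == s)%:R * @lift_op C d m.+1 S P (consc a t0) (consc b t0).
Proof.
move=> hS a b t s.
have hr : forall a' (t' : conf d m), restr S (consc a' t') = restr S (consc a' t0).
  by move=> a' t'; apply/ffunP => j; rewrite !ffunE (hS _ (valP j)) unlift_none.
have hl : forall k : 'I_m, lift ord0 k \notin S.
  move=> k; apply/negP => /hS e; move: (neq_lift ord0 k); by rewrite e eqxx.
have hf : [forall j, (j \notin S) ==> (consc a t j == consc b s j)] =
   (t == s) && [forall j, (j \notin S) ==> (consc a t0 j == consc b t0 j)].
  apply/forallP/andP.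
    move=> H; split.
      apply/eqP/ffunP => k; apply/eqP.
      by move/implyP: (H (lift ord0 k)) => /(_ (hl k)); rewrite !conscS.
    apply/forallP => j; apply/implyP => jn.
    case: (unliftP ord0 j) jn => [k ->|->] jn; first by rewrite !conscS.
    by move/implyP: (H ord0) => /(_ jn); rewrite !consc0.
  case=> /eqP <- /forallP H j; apply/implyP => jn.
  case: (unliftP ord0 j) jn => [k ->|->] jn; first by rewrite !conscS.
  by move/implyP: (H ord0) => /(_ jn); rewrite !consc0.
rewrite /lift_op hf (hr a t) (hr b s) -mulnb natrM.
by rewrite mulrCA.
Qed.


Lemma trace_prodD (T : finType) (Q A B : T -> T -> C) :
  trace_prod Q (fun x y => A x y + B x y) = trace_prod Q A + trace_prod Q B.
Proof.
rewrite /trace_prod -big_split; apply: eq_bigr => x _.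
rewrite -big_split; apply: eq_bigr => y _; by rewrite mulrDr.
Qed.

Lemma trace_prodB (T : finType) (Q A B : T -> T -> C) :
  trace_prod Q (fun x y => A x y - B x y) = trace_prod Q A - trace_prod Q B.
Proof.
rewrite /trace_prod -sumrB; apply: eq_bigr => x _.
rewrite -sumrB; apply: eq_bigr => y _; by rewrite mulrBr.
Qed.

End H.

Unset Implicit Arguments. Set Strict Implicit.

(* n = m.+1 qudits, n >= 2 <-> 1 <= m; qudit 1 of the paper is ord0. *)
Theorem lemma1 (C : numClosedFieldType) (d m : nat) (hm : (1 <= m)%N)
  (psi : conf d m.+1 -> C)
  (hpsi : \sum_(x : conf d m.+1) psi x * Num.conj (psi x) = 1)
  (alpha : 'I_d -> C) (w : 'I_d -> 'I_d -> C) (v : 'I_d -> conf d m -> C)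
  (halpha : forall i, 0 <= alpha i)
  (hw : orthonormal_fam w) (hv : orthonormal_fam v)
  (hschmidt : forall x : conf d m.+1,
      psi x = \sum_(i : 'I_d) alpha i * w i (x ord0) * v i (tailc x))
  (S : {set 'I_m.+1})
  (P : {ffun {i : 'I_m.+1 | i \in S} -> 'I_d} ->
       {ffun {i : 'I_m.+1 | i \in S} -> 'I_d} -> C)
  (hP : is_projector P) :
  let Pi := lift_op P in
  let rho := rho_of alpha w v in
  (((ord0 \in S) && [exists j, (j \in S) && (j != ord0)]) ->
     (d%:R)^-1 * trace_prod Pi (ketbra psi) <= trace_prod Pi rho) /\
  (~~ ((ord0 \in S) && [exists j, (j \in S) && (j != ord0)]) ->
     trace_prod Pi rho = trace_prod Pi (ketbra psi)).
Proof.
move=> Pi rho.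
have c0 : 'I_d.
  case: (pickP (fun x : conf d m.+1 => true)) => [x _|none]; first exact: x ord0.
  exfalso; move: hpsi; rewrite big_pred0 // => /eqP; by rewrite eq_sym oner_eq0.
have dpos : 0 < d%:R :> C.
  by rewrite ltr0n (leq_ltn_trans (leq0n c0) (ltn_ord c0)).
have hPi : is_projector Pi by apply: lift_op_proj.
pose u i (x : conf d m.+1) := alpha i * w i (x ord0) * v i (tailc x).
have hcu : forall i x, Num.conj (u i x) =
   alpha i * Num.conj (w i (x ord0)) * Num.conj (v i (tailc x)).
  by move=> i x; rewrite /u !rmorphM /= geC0_conj.
have hrho : forall x y, rho x y = \sum_i u i x * Num.conj (u i y).
  move=> x y; rewrite /rho /rho_of; apply: eq_bigr => i _.
  rewrite hcu /u; ring.
have hket : forall x y, ketbra psi x y =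
    \sum_(p : 'I_d * 'I_d) u p.1 x * Num.conj (u p.2 y).
  move=> x y; rewrite /ketbra !hschmidt -(pair_bigA _ (fun i j => u i x * Num.conj (u j y))) /= rmorph_sum mulr_suml.
  apply: eq_bigr => i _; rewrite mulr_sumr; apply: eq_bigr => j _ //.
pose T i j := trace_prod Pi (fun x y => u i x * Num.conj (u j y)).
have trrho : trace_prod Pi rho = \sum_i T i i.
  rewrite /T /trace_prod.
  under eq_bigr do under eq_bigr do rewrite hrho mulr_sumr.
  under eq_bigr do rewrite exchange_big.
  by rewrite exchange_big.
have trket : trace_prod Pi (ketbra psi) = \sum_i \sum_j T i j.
  rewrite pair_bigA /T /trace_prod.
  transitivity (\sum_x \sum_y \sum_(p : 'I_d * 'I_d) Pi x y * (u p.1 y * Num.conj (u p.2 x))).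
    apply: eq_bigr => x _; apply: eq_bigr => y _; by rewrite (hket y x) mulr_sumr.
  under [LHS]eq_bigr do rewrite exchange_big.
  by rewrite [LHS]exchange_big.
split.
  move=> _.
  have eT : forall i j, trace_prod Pi (ketbra (fun x => u i x - u j x)) =
      T i i - T i j - T j i + T j j.
    move=> i j.
    transitivity (trace_prod Pi (fun x y => u i x * Num.conj (u i y)
       - u i x * Num.conj (u j y) - u j x * Num.conj (u i y) + u j x * Num.conj (u j y))).
      rewrite /trace_prod; apply: eq_bigr => x _; apply: eq_bigr => y _.
      rewrite /ketbra rmorphB /=; congr (_ * _); ring.
    by rewrite trace_prodD !trace_prodB.
  have ge : 0 <= \sum_i \sum_j trace_prod Pi (ketbra (fun x => u i x - u j x)).
    apply: sumr_ge0 => i _; apply: sumr_ge0 => j _.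
    exact: trace_ketbra_ge0.
  have E : \sum_i \sum_j trace_prod Pi (ketbra (fun x => u i x - u j x)) =
      2 * (d%:R * trace_prod Pi rho - trace_prod Pi (ketbra psi)).
    under eq_bigr do under eq_bigr do rewrite eT.
    under eq_bigr do rewrite big_split /= sumrB sumrB /=.
    rewrite big_split /= sumrB sumrB /=.
    have h1 : \sum_i \sum_(j : 'I_d) T i i = d%:R * \sum_i T i i.
      by rewrite mulr_sumr; apply: eq_bigr => i _; rewrite sumr_const card_ord mulr_natl.
    have h2 : \sum_(i : 'I_d) \sum_j T j j = d%:R * \sum_i T i i.
      by rewrite sumr_const card_ord mulr_natl.
    have h3 : \sum_i \sum_j T j i = \sum_i \sum_j T i j by rewrite exchange_big.
    rewrite h1 h2 h3 trrho trket; ring.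
  move: ge; rewrite E pmulr_rge0 ?ltr0n // subr_ge0 => H.
  by rewrite ler_pdivrMl.
move=> ncross.
have hu : forall i b (s : conf d m), u i (consc b s) = alpha i * w i b * v i s.
  by move=> i b s; rewrite /u consc0 tailc_cons.
have T0 : forall i j, i != j -> T i j = 0.
  move=> i j hij.
  have eT : T i j = \sum_a0 \sum_t \sum_b \sum_s
      Pi (consc a0 t) (consc b s) * (u i (consc b s) * Num.conj (u j (consc a0 t))).
    rewrite /T /trace_prod sum_conf; apply: eq_bigr => a0 _; apply: eq_bigr => t _.
    by rewrite sum_conf.
  rewrite eT; move: ncross; rewrite negb_and => /orP[h0|hne].
    pose K (t s : conf d m) := Pi (consc c0 t) (consc c0 s) *
        (alpha i * v i s * Num.conj (alpha j * v j t)).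
    transitivity ((\sum_a0 w i a0 * Num.conj (w j a0)) * \sum_t \sum_s K t s); last first.
      by rewrite hw (negbTE hij) mul0r.
    rewrite mulr_suml; apply: eq_bigr => a0 _; rewrite mulr_sumr; apply: eq_bigr => t _.
    transitivity (\sum_b (a0 == b)%:R * \sum_s Pi (consc c0 t) (consc c0 s) *
        (u i (consc b s) * Num.conj (u j (consc a0 t)))).
      apply: eq_bigr => b _; rewrite mulr_sumr; apply: eq_bigr => s _.
      by rewrite /Pi (pi_noz _ c0 h0) -mulrA.
    rewrite sum_delta mulr_sumr; apply: eq_bigr => s _.
    rewrite /K !hu !rmorphM /=; ring.
  have hS : forall j, j \in S -> j = ord0.
    move=> k ks; case: (eqVneq k ord0) => // kn.
    by case/negP: hne; apply/existsP; exists k; rewrite ks kn.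
  pose t0 : conf d m := [ffun => c0].
  pose L a0 b := Pi (consc a0 t0) (consc b t0) *
      (alpha i * w i b * Num.conj (alpha j * w j a0)).
  transitivity (\sum_a0 \sum_b L a0 b * \sum_t v i t * Num.conj (v j t)); last first.
    by rewrite hv (negbTE hij); apply: big1 => a0 _; apply: big1 => b _; rewrite mulr0.
  apply: eq_bigr => a0 _.
  transitivity (\sum_t \sum_b L a0 b * (v i t * Num.conj (v j t))); last first.
    by rewrite exchange_big; apply: eq_bigr => b _; rewrite mulr_sumr.
  apply: eq_bigr => t _; apply: eq_bigr => b _.
  transitivity (\sum_s (t == s)%:R * (Pi (consc a0 t0) (consc b t0) *
        (u i (consc b s) * Num.conj (u j (consc a0 t))))).
    by apply: eq_bigr => s _; rewrite /Pi (pi_tail _ t0 hS) -mulrA.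
  rewrite sum_delta /L !hu !rmorphM /=; ring.
rewrite trrho trket; apply: eq_bigr => i _.
rewrite (bigD1 i) //= big1 ?addr0 // => j hji.
by apply: T0; rewrite eq_sym.
Qed.
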